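(* For every finite domain $D$ and every finite family $\Gamma=\{(P_i,Q_i)\}$ of promise relations over $D$, the problem $\operatorname{PCSP}_R(\Gamma)$ is polynomial-time equivalent to $\operatorname{PCSP}(\Gamma)$.
   Context: A promise relation over $D$ is a pair $(P,Q)$ with $P\subseteq Q\subseteq D^k$. An instance of $\operatorname{PCSP}(\Gamma)$ on variables $x_1,\dots,x_n$ is a list of clauses, each consisting of some $(P,Q)\in\Gamma$ of arity $k$ and a $k$-tuple of variables (repetitions allowed); $\Psi_P$ (resp. $\Psi_Q$) is the conjunction of the $P$- (resp. corresponding $Q$-) constraints, with assignments ranging over $D^n$. $\operatorname{PCSP}(\Gamma)$ is the promise problem: output YES if $\Psi_P$ is satisfiable, NO if $\Psi_Q$ is unsatisfiable. $\operatorname{PCSP}_R(\Gamma)$ is the same promise problem restricted to instances in which no clause contains the same variable more than once. *)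

(* Defs.v *)
From mathcomp Require Import all_boot.
Set Implicit Arguments.
Unset Strict Implicit.
Unset Printing Implicit Defensive.

Record pr_family (D : finType) := PrFamily {
  pf_m : nat;
  pf_ar : 'I_pf_m -> nat;
  pf_P : forall i : 'I_pf_m, {set (pf_ar i).-tuple D};
  pf_Q : forall i : 'I_pf_m, {set (pf_ar i).-tuple D}
}.

Section Instances.
Variables (D : finType) (G : pr_family D).

Definition clause (n : nat) := {i : 'I_(pf_m G) & (@pf_ar D G i).-tuple 'I_n}.

Definition instance := {n : nat & seq (clause n)}.

Definition inst_n (I : instance) : nat := projT1 I.
Definition inst_cl (I : instance) : seq (clause (inst_n I)) := projT2 I.

Definition satP (I : instance) : Prop :=
  exists a : 'I_(inst_n I) -> D,
    forall c, c \in inst_cl I -> map_tuple a (projT2 c) \in @pf_P D G (projT1 c).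

Definition satQ (I : instance) : Prop :=
  exists a : 'I_(inst_n I) -> D,
    forall c, c \in inst_cl I -> map_tuple a (projT2 c) \in @pf_Q D G (projT1 c).

Definition no_repeats (I : instance) : Prop :=
  forall c, c \in inst_cl I -> uniq (projT2 c).

Definition enc_nat (k : nat) : seq bool := nseq k true ++ [:: false].

Definition enc_clause n (c : clause n) : seq bool :=
  enc_nat (val (projT1 c)) ++ flatten (map (fun v : 'I_n => enc_nat (val v)) (val (projT2 c))).

Definition enc_inst (I : instance) : seq bool :=
  enc_nat (inst_n I) ++ flatten (map (@enc_clause (inst_n I)) (inst_cl I)).

End Instances.

Record promise_problem := PromiseProblem {
  pp_yes : seq bool -> Prop;
  pp_no  : seq bool -> Prop
}.

Definition PCSP (D : finType) (G : pr_family D) : promise_problem :=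
  PromiseProblem (fun x => exists I : instance G, x = enc_inst I /\ satP I)
                 (fun x => exists I : instance G, x = enc_inst I /\ ~ satQ I).

Definition PCSP_R (D : finType) (G : pr_family D) : promise_problem :=
  PromiseProblem
    (fun x => exists I : instance G, [/\ x = enc_inst I, no_repeats I & satP I])
    (fun x => exists I : instance G, [/\ x = enc_inst I, no_repeats I & ~ satQ I]).

(* Machine model: deterministic single-tape Turing machines with       *)
(* finitely many states over the tape alphabet {0,1,blank}             *)
(* (blank = None).                                                     *)
Inductive move := MoveL | MoveR | Stay.

Record TM := MkTM {
  tm_nst : nat;  (* states are 'I_(tm_nst.+1); the start state is ord0 *)
  (* None = halt *)
  tm_delta : 'I_tm_nst.+1 -> option bool ->
             option ('I_tm_nst.+1 * option bool * move)
}.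

(* configuration: state, tape to the left of the head (nearest first),
   symbol under the head, tape to the right of the head *)
Record config (M : TM) := Config {
  cf_state : 'I_(tm_nst M).+1;
  cf_left : seq (option bool);
  cf_cur : option bool;
  cf_right : seq (option bool)
}.

Definition do_move (l : seq (option bool)) (s : option bool) (r : seq (option bool))
  (d : move) : seq (option bool) * option bool * seq (option bool) :=
  match d with
  | Stay => (l, s, r)
  | MoveL => match l with
             | [::] => ([::], None, s :: r)
             | a :: l' => (l', a, s :: r)
             end
  | MoveR => match r with
             | [::] => (s :: l, None, [::])
             | a :: r' => (s :: l, a, r')
             end
  end.

(* run M t c = Some c' iff M started in configuration c halts within t
   steps, in configuration c'. *)
Fixpoint run (M : TM) (t : nat) (c : config M) : option (config M) :=
  match tm_delta (cf_state c) (cf_cur c) with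
  | None => Some c
  | Some (q, w, d) =>
      match t with
      | 0 => None
      | t'.+1 =>
          let: (l, s, r) := do_move (cf_left c) w (cf_right c) d in
          run t' (Config q l s r)
      end
  end.

Definition init_config (M : TM) (x : seq bool) : config M :=
  match x with
  | [::] => Config ord0 [::] None [::]
  | b :: x' => Config ord0 [::] (Some b) (map Some x')
  end.

Fixpoint read_word (s : seq (option bool)) : seq bool :=
  match s with
  | Some b :: s' => b :: read_word s'
  | _ => [::]
  end.

Definition output (M : TM) (c : config M) : seq bool :=
  read_word (cf_cur c :: cf_right c).

Definition poly_time_computable (f : seq bool -> seq bool) : Prop :=
  exists (M : TM) (k : nat), forall x : seq bool,
    exists c : config M, run (size x ^ k + k) (init_config M x) = Some c
                         /\ output c = f x.

Definition pt_reduces (A B : promise_problem) : Prop :=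
  exists f : seq bool -> seq bool, poly_time_computable f /\
    (forall x, pp_yes A x -> pp_yes B (f x)) /\
    (forall x, pp_no A x -> pp_no B (f x)).

Definition pt_equivalent (A B : promise_problem) : Prop :=
  pt_reduces A B /\ pt_reduces B A.

(* Main.v *)
Require Import Defs.
From mathcomp Require Import all_boot zify.
Set Implicit Arguments.
Unset Strict Implicit.
Unset Printing Implicit Defensive.

Definition reach (M : TM) (c c' : config M) (n : nat) :=
  forall t, run (n + t) c = run t c'.

Lemma reach0 M (c : config M) : reach c c 0.
Proof. by move=> t. Qed.

Lemma reach_trans M (c1 c2 c3 : config M) n1 n2 :
  reach c1 c2 n1 -> reach c2 c3 n2 -> reach c1 c3 (n1 + n2).
Proof. by move=> h1 h2 t; rewrite -addnA h1 h2. Qed.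

Lemma reach_eq M (c1 c2 : config M) n1 n2 : n1 = n2 -> reach c1 c2 n1 -> reach c1 c2 n2.
Proof. by move=> ->. Qed.

Definition conf (M : TM) q (l r : seq (option bool)) : config M :=
  Config q l (head None r) (behead r).
Definition atL (M : TM) q (L R : seq (option bool)) : config M :=
  conf q (behead L) (head None L :: R).

Lemma stepR (M : TM) q l r q' w :
  tm_delta q (head None r) = Some (q', w, MoveR) ->
  reach (@conf M q l r) (conf q' (w :: l) (behead r)) 1.
Proof.
move=> hd t; rewrite add1n /= hd /=.
by case: r hd => [|a [|b r]].
Qed.

Lemma stepL (M : TM) q l r q' w :
  tm_delta q (head None r) = Some (q', w, MoveL) ->
  reach (@conf M q l r) (@atL M q' l (w :: behead r)) 1.
Proof.
move=> hd t; rewrite add1n /= hd /=.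
by case: l => [|a l].
Qed.

Lemma halt_run (M : TM) (c : config M) t :
  tm_delta (cf_state c) (cf_cur c) = None -> run t c = Some c.
Proof. by case: t => [|t] /= ->. Qed.

Fixpoint allNone (s : seq (option bool)) :=
  if s is a :: s' then (a == None) && allNone s' else true.

Lemma read_word_map (x : seq bool) r : allNone r -> read_word (map Some x ++ r) = x.
Proof.
elim: x => [|b x IH] /= h; last by rewrite IH.
by case: r h => [|[a|] r].
Qed.

Lemma read_word_hb (s : seq (option bool)) : read_word (head None s :: behead s) = read_word s.
Proof. by case: s. Qed.

Lemma poly_aux (A n : nat) : A * (n.+1 ^ 2) <= n ^ (4 * A + 4) + (4 * A + 4).
Proof.
case: n => [|n]; first by rewrite exp1n muln1 exp0n //; lia.
case: n => [|n]; first by rewrite exp1n; lia.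
set m := n.+2.
have hm : 2 <= m by [].
have h1 : m.+1 ^ 2 <= 4 * m ^ 2 by rewrite !expnS !expn0; nia.
have h2 : 4 * A < m ^ (4 * A + 2).
  have h := ltn_expl (4 * A + 2) (isT : 1 < 2).
  have h' : 2 ^ (4 * A + 2) <= m ^ (4 * A + 2) by rewrite leq_exp2r //; lia.
  lia.
have -> : m ^ (4 * A + 4) = m ^ (4 * A + 2) * m ^ 2 by rewrite -expnD -addnA.
apply: (@leq_trans (m ^ (4 * A + 2) * m ^ 2)); last exact: leq_addr.
apply: (leq_trans (leq_mul (leqnn A) h1)); rewrite mulnA (mulnC A 4).
by apply: leq_mul => //; exact: ltnW.
Qed.

Lemma final_bound (S B n : nat) :
  S.+1 * (n * (4 + 2 * n + 2 * (S.+1 * (B * n))) + n + 2)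
  <= n ^ (4 * (S.+1 * (6 + 2 * (S.+1 * B))) + 4) + (4 * (S.+1 * (6 + 2 * (S.+1 * B))) + 4).
Proof.
apply: leq_trans (poly_aux _ _).
rewrite -mulnA leq_mul2l; apply/orP; right.
rewrite !expnS !expn0; nia.
Qed.

Section Machine.
Variables (Q : finType) (S B : nat).
Variable start : 'I_S.+1 -> Q.
Variable step : 'I_S.+1 -> Q -> bool -> Q * ('I_B * bool).

Definition outw (w : 'I_B * bool) : seq bool := nseq w.1 true ++ nseq w.2 false.

Fixpoint trans p q (x : seq bool) : seq bool :=
  if x is b :: x' then outw (step p q b).2 ++ trans p (step p q b).1 x' else [::].

Inductive AState :=
| Read of 'I_S.+1 & Q
| GoR1 of 'I_S.+1 & Q & bool & ('I_B * bool)
| GoR2 of 'I_S.+1 & Q & bool & ('I_B * bool)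
| GoL2 of 'I_S.+1 & Q & bool
| GoL1 of 'I_S.+1 & Q & bool
| Rewind of 'I_S.+1
| Done.

Definition SumT : finType := ((((((('I_S.+1 * Q) + ('I_S.+1 * Q * bool * ('I_B * bool)))
  + ('I_S.+1 * Q * bool * ('I_B * bool))) + ('I_S.+1 * Q * bool))
  + ('I_S.+1 * Q * bool)) + 'I_S.+1) + unit)%type.

Definition toSum (s : AState) : SumT :=
  match s with
  | Read p q => inl (inl (inl (inl (inl (inl (p, q))))))
  | GoR1 p q b w => inl (inl (inl (inl (inl (inr (p, q, b, w))))))
  | GoR2 p q b w => inl (inl (inl (inl (inr (p, q, b, w)))))
  | GoL2 p q b => inl (inl (inl (inr (p, q, b))))
  | GoL1 p q b => inl (inl (inr (p, q, b)))
  | Rewind p => inl (inr p)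
  | Done => inr tt
  end.

Definition ofSum (x : SumT) : AState :=
  match x with
  | inl (inl (inl (inl (inl (inl (p, q)))))) => Read p q
  | inl (inl (inl (inl (inl (inr (p, q, b, w)))))) => GoR1 p q b w
  | inl (inl (inl (inl (inr (p, q, b, w))))) => GoR2 p q b w
  | inl (inl (inl (inr (p, q, b)))) => GoL2 p q b
  | inl (inl (inr (p, q, b))) => GoL1 p q b
  | inl (inr p) => Rewind p
  | inr _ => Done
  end.

Lemma toSumK : cancel toSum ofSum. Proof. by case. Qed.

Definition startA := Read (inord 0) (start (inord 0)).

Definition encS (s : AState) : 'I_#|SumT|.+1 := lift ord0 (enum_rank (toSum s)).
Definition decS (q : 'I_#|SumT|.+1) : AState :=
  match unlift ord0 q with Some j => ofSum (enum_val j) | None => startA end.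

Lemma encSK s : decS (encS s) = s.
Proof. by rewrite /decS /encS liftK enum_rankK toSumK. Qed.

Lemma decS0 : decS ord0 = startA.
Proof. by rewrite /decS unlift_none. Qed.

Definition wnil (w : 'I_B * bool) := (w.1 == 0 :> nat) && ~~ w.2.

Definition decI (a : 'I_B) : 'I_B := Ordinal (leq_ltn_trans (leq_subr 1 a) (ltn_ord a)).

Definition adelta (s : AState) (c : option bool) : option (AState * option bool * move) :=
  match s, c with
  | Read p q, Some b =>
      if wnil (step p q b).2 then Some (Read p (step p q b).1, Some b, MoveR)
      else Some (GoR1 p (step p q b).1 b (step p q b).2, None, MoveR)
  | Read p q, None =>
      if p == ord_max then Some (Done, None, MoveR) else Some (Rewind p, None, MoveL)
  | GoR1 p q b w, Some c => Some (GoR1 p q b w, Some c, MoveR)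
  | GoR1 p q b w, None => Some (GoR2 p q b w, None, MoveR)
  | GoR2 p q b w, Some c => Some (GoR2 p q b w, Some c, MoveR)
  | GoR2 p q b w, None =>
      if 0 < w.1 then
        if wnil (decI w.1, w.2) then Some (GoL2 p q b, Some true, MoveL)
        else Some (GoR2 p q b (decI w.1, w.2), Some true, MoveR)
      else Some (GoL2 p q b, Some false, MoveL)
  | GoL2 p q b, Some c => Some (GoL2 p q b, Some c, MoveL)
  | GoL2 p q b, None => Some (GoL1 p q b, None, MoveL)
  | GoL1 p q b, Some c => Some (GoL1 p q b, Some c, MoveL)
  | GoL1 p q b, None => Some (Read p q, Some b, MoveR)
  | Rewind p, Some c => Some (Rewind p, Some c, MoveL)
  | Rewind p, None => Some (Read (inord p.+1) (start (inord p.+1)), None, MoveR)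
  | Done, _ => None
  end.

Definition tdelta (q : 'I_#|SumT|.+1) (c : option bool) :=
  match adelta (decS q) c with
  | Some (s, w, d) => Some (encS s, w, d)
  | None => None
  end.

Definition Mach : TM := MkTM tdelta.

Definition cA (s : AState) l r : config Mach := @conf Mach (encS s) l r.
Definition aA (s : AState) L R : config Mach := @atL Mach (encS s) L R.

Lemma AstepR (q : 'I_(tm_nst Mach).+1) s l r s' w :
  decS q = s -> adelta s (head None r) = Some (s', w, MoveR) ->
  reach (@conf Mach q l r) (cA s' (w :: l) (behead r)) 1.
Proof. by move=> hq hd; apply: stepR; rewrite /= /tdelta hq hd. Qed.

Lemma AstepL (q : 'I_(tm_nst Mach).+1) s l r s' w :
  decS q = s -> adelta s (head None r) = Some (s', w, MoveL) ->
  reach (@conf Mach q l r) (aA s' l (w :: behead r)) 1.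
Proof. by move=> hq hd; apply: stepL; rewrite /= /tdelta hq hd. Qed.

Lemma AstepR' s l r s' w :
  adelta s (head None r) = Some (s', w, MoveR) ->
  reach (cA s l r) (cA s' (w :: l) (behead r)) 1.
Proof. move=> h; exact: (@AstepR (encS s) s l r s' w (encSK s) h). Qed.

Lemma AstepL' s l r s' w :
  adelta s (head None r) = Some (s', w, MoveL) ->
  reach (cA s l r) (aA s' l (w :: behead r)) 1.
Proof. move=> h; exact: (@AstepL (encS s) s l r s' w (encSK s) h). Qed.

Lemma skipR s l (w : seq bool) r :
  (forall c, adelta s (Some c) = Some (s, Some c, MoveR)) ->
  reach (cA s l (map Some w ++ r)) (cA s (catrev (map Some w) l) r) (size w).
Proof.
move=> hs; elim: w l => [|c w IH] l /=; first exact: reach0.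
rewrite -add1n; apply: reach_trans (IH _).
exact: (@AstepR (encS s) s l (Some c :: map Some w ++ r) s (Some c) (encSK s) (hs c)).
Qed.

Lemma skipL s L (v : seq bool) R :
  (forall c, adelta s (Some c) = Some (s, Some c, MoveL)) ->
  reach (aA s (map Some v ++ L) R) (aA s L (catrev (map Some v) R)) (size v).
Proof.
move=> hs; elim: v R => [|c v IH] R /=; first exact: reach0.
rewrite -add1n; apply: reach_trans (IH _).
exact: (@AstepL (encS s) s (map Some v ++ L) (Some c :: R) s (Some c) (encSK s) (hs c)).
Qed.


Lemma allNone_head r : allNone r -> head None r = None.
Proof. by case: r => [|[a|] r]. Qed.

Lemma allNone_behead r : allNone r -> allNone (behead r).
Proof. by case: r => [|a r] //= /andP[]. Qed.

Lemma write_ok p q b (w : 'I_B * bool) L r0 :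
  ~~ wnil w -> allNone r0 ->
  exists u cl r0', [/\ outw w = rcons u cl, allNone r0' &
    reach (cA (GoR2 p q b w) L r0) (aA (GoL2 p q b) (catrev (map Some u) L) (Some cl :: r0'))
      (size (outw w))].
Proof.
case: w => a z; move: {2}(val a) (erefl (val a)) => n.
elim: n a L r0 => [|n IH] a L r0 ha hw hr.
  have hz : z by move: hw; rewrite /wnil /= ha; case: z.
  exists [::], false, (behead r0); split.
  - by rewrite /outw /= ha hz.
  - exact: allNone_behead.
  - rewrite /outw /= ha hz /=.
    apply: AstepL'; by rewrite allNone_head //= ha.
have hd : val (decI a) = n by rewrite /= ha subn1.
have hd' : a - 1 = n by rewrite ha subn1.
case hwn: (wnil (decI a, z)).
  have [hn hz] : n = 0 /\ z = false.
    move: hwn; rewrite /wnil [X in X == _]hd; clear IH hd hd' ha hw; by case: z; case: n.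
  subst z.
  exists [::], true, (behead r0); split.
  - by rewrite /outw /= ha hn.
  - exact: allNone_behead.
  - rewrite /outw /= ha hn /=.
    apply: AstepL'; by rewrite allNone_head //= ha hwn.
have [u [cl [r0' [hu hr' hre]]]] := IH (decI a) (Some true :: L) (behead r0) hd
   (negbT hwn) (allNone_behead hr).
exists (true :: u), cl, r0'; split => //.
- by move: hu; rewrite /outw /= ha subn1 /= => ->.
- have -> : size (outw (a, z)) = 1 + size (outw (decI a, z)) by rewrite /outw /= ha subn1.
  apply: reach_trans hre.
  apply: AstepR'; by rewrite allNone_head //= ha hwn.
Qed.


Definition tailok out R := exists r0, allNone r0 /\
  (R = None :: map Some out ++ r0 \/ (out = [::] /\ R = [::])).

Lemma tailok_conf out R : tailok out R ->
  exists r0, allNone r0 /\ forall q l, @conf Mach q l R = @conf Mach q l (None :: map Some out ++ r0).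
Proof.
case=> r0 [hr [->|[-> ->]]]; first by exists r0.
by exists [::].
Qed.

Lemma wnil_outw w : wnil w -> outw w = [::].
Proof. case: w => a z; rewrite /wnil /outw /= => /andP[/eqP -> ]; by case: z. Qed.

Lemma catrev_map_rev (v : seq bool) R : catrev (map Some (rev v)) R = map Some v ++ R.
Proof. by rewrite catrevE map_rev revK. Qed.

Lemma arith_step a s K n : a <= K -> n <= s * K -> a + n <= s.+1 * K.
Proof. rewrite mulSn; lia. Qed.

Lemma pass_ok p l0 x : forall suf pre q (qs : 'I_(tm_nst Mach).+1) out R,
  x = pre ++ suf -> decS qs = Read p q -> tailok out R ->
  exists n qe R', [/\ decS qe = Read p (foldl (fun q b => (step p q b).1) q suf),
     reach (@conf Mach qs (catrev (map Some pre) l0) (map Some suf ++ R))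
           (@conf Mach qe (catrev (map Some x) l0) R') n,
     tailok (out ++ trans p q suf) R' &
     n <= size suf * (4 + 2 * size x + 2 * size (out ++ trans p q suf))].
Proof.
elim=> [|b suf IH] pre q qs out R hx hqs hR.
  exists 0, qs, R; split => //=.
  - rewrite hx cats0 /=; exact: reach0.
  - by rewrite cats0.
set q' := (step p q b).1; set w := (step p q b).2.
have hxb : x = (pre ++ [:: b]) ++ suf by rewrite hx -catA.
have hL : Some b :: catrev (map Some pre) l0 = catrev (map Some (pre ++ [:: b])) l0.
  by rewrite map_cat catrev_catl.
have htr : trans p q (b :: suf) = outw w ++ trans p q' suf by [].
case hw: (wnil w).
  have e1 : reach (@conf Mach qs (catrev (map Some pre) l0) (map Some (b :: suf) ++ R))
     (cA (Read p q') (catrev (map Some (pre ++ [:: b])) l0) (map Some suf ++ R)) 1.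
    rewrite -hL; apply: (AstepR _ hqs); by rewrite /= hw.
  have [n [qe [R' [hqe hre hR' hn]]]] := IH _ _ (encS (Read p q')) _ _ hxb (encSK _) hR.
  exists (1 + n), qe, R'; split => //.
  - exact: reach_trans e1 hre.
  - by rewrite htr wnil_outw.
  - rewrite htr wnil_outw //= in hn *. rewrite mulSn. lia.
have [r0 [hr0 hRc]] := tailok_conf hR.
set L0 := catrev (map Some pre) l0.
set L1 := catrev (map Some suf) (None :: L0).
have e1 : reach (@conf Mach qs L0 (map Some (b :: suf) ++ R))
     (cA (GoR1 p q' b w) (None :: L0) (map Some suf ++ R)) 1.
  apply: (AstepR _ hqs); by rewrite /= hw.
have e2 : reach (cA (GoR1 p q' b w) (None :: L0) (map Some suf ++ R))
     (cA (GoR1 p q' b w) L1 (None :: map Some out ++ r0)) (size suf).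
  rewrite /cA -(hRc _ L1). exact: skipR.
have e3 : reach (cA (GoR1 p q' b w) L1 (None :: map Some out ++ r0))
     (cA (GoR2 p q' b w) (None :: L1) (map Some out ++ r0)) 1.
  exact: AstepR'.
have e4 : reach (cA (GoR2 p q' b w) (None :: L1) (map Some out ++ r0))
     (cA (GoR2 p q' b w) (catrev (map Some out) (None :: L1)) r0) (size out).
  exact: skipR.
have [u [cl [r0' [hu hr0' e5]]]] := write_ok p q' b (catrev (map Some out) (None :: L1)) (negbT hw) hr0.
have e6 : reach (aA (GoL2 p q' b) (catrev (map Some u) (catrev (map Some out) (None :: L1))) (Some cl :: r0'))
   (aA (GoL2 p q' b) (None :: L1) (map Some (out ++ u) ++ Some cl :: r0')) (size (out ++ u)).
  rewrite -catrev_catl -map_cat catrevE -map_rev -(catrev_map_rev (out ++ u)) -(size_rev (out ++ u)).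
  exact: skipL.
set R2 := map Some (out ++ u) ++ Some cl :: r0'.
have e7 : reach (aA (GoL2 p q' b) (None :: L1) R2) (aA (GoL1 p q' b) L1 (None :: R2)) 1.
  exact: AstepL'.
have e8 : reach (aA (GoL1 p q' b) L1 (None :: R2))
   (aA (GoL1 p q' b) (None :: L0) (map Some suf ++ None :: R2)) (size suf).
  rewrite /L1 catrevE -map_rev -(catrev_map_rev suf) -(size_rev suf).
  exact: skipL.
have e9 : reach (aA (GoL1 p q' b) (None :: L0) (map Some suf ++ None :: R2))
   (cA (Read p q') (catrev (map Some (pre ++ [:: b])) l0) (map Some suf ++ None :: R2)) 1.
  rewrite -hL; exact: AstepR'.
have hR2 : tailok (out ++ outw w) (None :: R2).
  exists r0'; split => //; left.
  by rewrite /R2 hu -cats1 !map_cat -!catA.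
have [n [qe [R' [hqe hre hR' hn]]]] := IH _ _ (encS (Read p q')) _ _ hxb (encSK _) hR2.
exists ((((((((1 + size suf) + 1) + size out) + size (outw w)) + size (out ++ u)) + 1) + size suf) + 1 + n), qe, R'.
split => //.
- apply: (reach_trans _ hre).
  exact: (reach_trans (reach_trans (reach_trans (reach_trans (reach_trans (reach_trans (reach_trans (reach_trans e1 e2) e3) e4) e5) e6) e7) e8) e9).
- by rewrite htr catA.
- rewrite htr catA.
  have hs1 : size (out ++ u) < size (out ++ outw w) by rewrite hu !size_cat size_rcons; lia.
  have hs2 : size (out ++ outw w) <= size ((out ++ outw w) ++ trans p q' suf) by rewrite (size_cat (out ++ outw w)) leq_addr.
  have hs3 : size suf < size x by rewrite hx size_cat /=; lia.
  apply: (arith_step _ hn).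
  move: hs1 hs2 hs3; rewrite !size_cat; lia.
Qed.


Definition outs j x := flatten [seq trans (inord i) (start (inord i)) x | i <- iota 0 j].

Lemma outsS j x : outs j.+1 x = outs j x ++ trans (inord j) (start (inord j)) x.
Proof. by rewrite /outs -addn1 iotaD map_cat flatten_cat /= cats0. Qed.

Lemma outs_mono j k x : j <= k -> size (outs j x) <= size (outs k x).
Proof.
move=> /subnK <-; rewrite addnC /outs iotaD map_cat flatten_cat size_cat.
exact: leq_addr.
Qed.

Lemma read_None_last (j : nat) : j = S -> (inord j : 'I_S.+1) == ord_max.
Proof. move=> ->; apply/eqP/val_inj; by rewrite /= inordK. Qed.

Lemma passes_ok x : forall k j (qs : 'I_(tm_nst Mach).+1) l0 R, j + k = S ->
  decS qs = Read (inord j) (start (inord j)) -> head None l0 = None ->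
  tailok (outs j x) R ->
  exists n (cf : config Mach), [/\ reach (@conf Mach qs l0 (map Some x ++ R)) cf n,
    tm_delta (cf_state cf) (cf_cur cf) = None, output cf = outs S.+1 x &
    n <= k.+1 * (size x * (4 + 2 * size x + 2 * size (outs S.+1 x)) + size x + 2)].
Proof.
elim=> [|k IH] j qs l0 R hjk hqs hl0 hR.
  have [n1 [qe [R' [hqe e1 hR' hn1]]]] := @pass_ok (inord j) l0 x x [::] _ qs (outs j x) R erefl hqs hR.
  have [r0 [hr0 hc]] := tailok_conf hR'.
  have hj : j = S by rewrite addn0 in hjk.
  exists (n1 + 1), (cA Done (None :: catrev (map Some x) l0) (map Some (outs j x ++ trans (inord j) (start (inord j)) x) ++ r0)).
  split.
  - apply: (reach_trans e1). rewrite hc; apply: (AstepR _ hqe).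
    by rewrite /= read_None_last.
  - by rewrite /= /tdelta encSK.
  - by rewrite /output /cA /conf read_word_hb read_word_map // -outsS hj.
  - rewrite mul1n -outsS hj in hn1 *; lia.
have [n1 [qe [R' [hqe e1 hR' hn1]]]] := @pass_ok (inord j) l0 x x [::] _ qs (outs j x) R erefl hqs hR.
have [r0 [hr0 hc]] := tailok_conf hR'.
have hjS : j < S by rewrite -hjk; lia.
have hnl : (inord j : 'I_S.+1) != ord_max.
  apply/negP => /eqP /(congr1 val); rewrite /= inordK; [lia | lia].
set out' := outs j x ++ trans (inord j) (start (inord j)) x.
set R3 := map Some x ++ None :: map Some out' ++ r0.
have e2 : reach (@conf Mach qe (catrev (map Some x) l0) (None :: map Some out' ++ r0))
   (aA (Rewind (inord j)) (catrev (map Some x) l0) (None :: map Some out' ++ r0)) 1.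
  by apply: (AstepL _ hqe); rewrite /= (negbTE hnl).
have e3 : reach (aA (Rewind (inord j)) (catrev (map Some x) l0) (None :: map Some out' ++ r0))
   (aA (Rewind (inord j)) l0 R3) (size x).
  rewrite /R3 catrevE -map_rev -(catrev_map_rev x) -(size_rev x); exact: skipL.
have e4 : reach (aA (Rewind (inord j)) l0 R3)
   (cA (Read (inord j.+1) (start (inord j.+1))) (None :: behead l0) (behead (None :: R3))) 1.
  have -> : (inord j.+1 : 'I_S.+1) = inord (@inord S j).+1 by rewrite inordK //; lia.
  rewrite /aA /atL hl0; exact: AstepR'.
have hR3 : tailok (outs j.+1 x) (None :: map Some out' ++ r0).
  by exists r0; split => //; left; rewrite outsS.
have [n2 [cf [e5 hcf hout hn2]]] := IH j.+1 _ (None :: behead l0) _ (etrans (addSnnS _ _) hjk) (encSK _) erefl hR3.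
exists (n1 + 1 + size x + 1 + n2), cf; split => //.
- apply: (reach_trans _ e5); rewrite hc in e1.
  exact: (reach_trans (reach_trans (reach_trans e1 e2) e3) e4).
- apply: (arith_step _ hn2).
  have : size out' <= size (outs S.+1 x) by rewrite /out' -outsS; apply: outs_mono; lia.
  move=> h2.
  have h3 : size x * (4 + 2 * size x + 2 * size out') <= size x * (4 + 2 * size x + 2 * size (outs S.+1 x)).
    by rewrite leq_mul2l leq_add2l leq_mul2l h2 !orbT.
  move: hn1 h3; rewrite -/out'.
  generalize (size x * (4 + 2 * size x + 2 * size out')) (size x * (4 + 2 * size x + 2 * size (outs S.+1 x))).
  lia.
Qed.


Lemma size_trans p q x : size (trans p q x) <= B * size x.
Proof.
elim: x q => [|b x IH] q //=.
rewrite size_cat mulnS; apply: leq_add => //.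
rewrite /outw size_cat !size_nseq.
case: (step p q b).2 => a z /=; have := ltn_ord a; case: z => /=; lia.
Qed.

Lemma size_outs j x : size (outs j x) <= j * (B * size x).
Proof.
elim: j => [|j IH] //; rewrite outsS size_cat mulSn addnC.
by apply: leq_add => //; exact: size_trans.
Qed.

Lemma init_conf (x : seq bool) : init_config Mach x = @conf Mach ord0 [::] (map Some x ++ [::]).
Proof. by rewrite cats0; case: x. Qed.

Theorem gen_ptc : poly_time_computable (outs S.+1).
Proof.
exists Mach, (4 * (S.+1 * (6 + 2 * (S.+1 * B))) + 4) => x.
have hR : tailok (outs 0 x) [::] by exists [::]; split => //; right.
have [n [cf [e hcf hout hn]]] := @passes_ok x S 0 ord0 [::] [::] erefl decS0 erefl hR.
exists cf; split => //.
have hb := final_bound S B (size x).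
have hn' : n <= size x ^ (4 * (S.+1 * (6 + 2 * (S.+1 * B))) + 4) + (4 * (S.+1 * (6 + 2 * (S.+1 * B))) + 4).
  apply: (leq_trans hn); apply: (leq_trans _ hb).
  rewrite leq_mul2l; apply/orP; right.
  rewrite leq_add2r leq_add2r leq_mul2l leq_add2l leq_mul2l size_outs !orbT //.
rewrite -(subnKC hn') init_conf e; exact: halt_run.
Qed.

End Machine.

Lemma trans_cat (Q : finType) S B (step : 'I_S.+1 -> Q -> bool -> Q * ('I_B * bool)) p q x y :
  trans step p q (x ++ y) = trans step p q x ++ trans step p (foldl (fun q b => (step p q b).1) q x) y.
Proof. by elim: x q => [|b x IH] q //=; rewrite IH catA. Qed.

Lemma trans_cons (Q : finType) S B (step : 'I_S.+1 -> Q -> bool -> Q * ('I_B * bool)) p q b x :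
  trans step p q (b :: x) = outw (step p q b).2 ++ trans step p (step p q b).1 x.
Proof. by []. Qed.

Lemma vinordK n i : i < n.+1 -> val (inord i : 'I_n.+1) = i.
Proof. exact: inordK. Qed.

Lemma cs (T U : finType) (f : T -> U) : \sum_(d : U) #|[set j | f j == d]| = #|T|.
Proof.
transitivity (\sum_(d : U) \sum_(j : T) (f j == d : nat)).
  apply: eq_bigr => d _; rewrite cardsE -sum1_card big_mkcond /=.
  by apply: eq_bigr => j _; rewrite unfold_in; case: ifP => h; rewrite /eq_op /= h.
rewrite exchange_big /= -sum1_card; apply: eq_bigr => j _.
rewrite (bigD1 (f j)) //= eqxx big1 // => d /negbTE; rewrite eq_sym => ->.
by [].
Qed.

Lemma arith_maj K x y : 0 < K -> x.+1 * K <= x * y -> K <= y.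
Proof.
move=> hK hxy; rewrite leqNgt; apply/negP => hy.
have : x * y <= x * K by rewrite leq_mul2l (ltnW hy) orbT.
rewrite mulSn in hxy; lia.
Qed.

Section Red.
Variables (D : finType) (G : pr_family D).

Local Notation m := (pf_m G).
Local Notation ar := (@pf_ar D G).

Definition K := (\max_(i < m) ar i).+1.
Definition N := (#|D|.+1 * K)%N.

Arguments K : simpl never.
Arguments N : simpl never.

Lemma ar_lt i : ar i < K.
Proof. by rewrite ltnS; exact: (@leq_bigmax _ (fun i => ar i)). Qed.

Lemma N_gt0 : 0 < N. Proof. by rewrite /N muln_gt0. Qed.
Lemma K_leN : K <= N. Proof. by rewrite /N leq_pmull. Qed.

Definition Fam := {ffun 'I_K -> 'I_N}.
Definition S := #|{ffun 'I_K -> 'I_N}|.-1.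
Lemma S_card : S.+1 = #|{ffun 'I_K -> 'I_N}|.
Proof. by rewrite /S prednK // card_ffun !card_ord expn_gt0 N_gt0. Qed.

Definition j0 : 'I_N := Ordinal N_gt0.
Definition dflt : Fam := [ffun _ => j0].
Definition sig_of (p : 'I_S.+1) : Fam := nth dflt (enum {ffun 'I_K -> 'I_N}) p.

Definition QT : finType := option (option ('I_m.+1 + ('I_m * 'I_K))).
Definition Dead : QT := None.
Definition Hdr : QT := Some None.
Definition Rel i : QT := Some (Some (inl i)).
Definition Var i t : QT := Some (Some (inr (i, t))).

Definition Bn := N.+1.
Definition oN : 'I_Bn := ord_max.
Definition o0 : 'I_Bn := ord0.

Definition rstep (p : 'I_S.+1) (q : QT) (b : bool) : QT * ('I_Bn * bool) :=
  match q with
  | None => (Dead, (o0, false))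
  | Some None =>
      if b then (Hdr, (if val p == 0 then oN else o0, false))
      else (if injectiveb (sig_of p) then Rel ord0 else Dead, (o0, val p == 0))
  | Some (Some (inl i)) =>
      if b then (if i.+1 < m then Rel (inord i.+1) else Dead, (inord 1, false))
      else (match (insub (val i) : option 'I_m) with
            | Some i' => if 0 < ar i' then Var i' (inord 0) else Rel ord0
            | None => Dead end, (o0, true))
  | Some (Some (inr (i, t))) =>
      if b then (Var i t, (oN, false))
      else (if t.+1 < ar i then Var i (inord t.+1) else Rel ord0,
            (widen_ord (leqnSn N) (sig_of p t), true))
  end.

Definition F := outs (fun _ => Hdr) rstep S.+1.

Lemma F_ptc : poly_time_computable F.
Proof. exact: gen_ptc. Qed.


Local Notation qf p q x := (foldl (fun q0 b0 => (rstep p q0 b0).1) q x).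
Local Notation tr p q x := (trans rstep p q x).

Lemma o1 : nat_of_ord (inord 1 : 'I_Bn) = 1.
Proof. by rewrite inordK // /Bn ltnS N_gt0. Qed.

Lemma outw_oN : outw (oN, false) = nseq N true.
Proof. by rewrite /outw /= cats0. Qed.

Lemma hdr_ones p k :
  tr p Hdr (nseq k true) = (if val p == 0 then nseq (k * N) true else [::]) /\ qf p Hdr (nseq k true) = Hdr.
Proof.
elim: k => [|k [IH1 IH2]]; first by case: (val p == 0).
have e : nseq k.+1 true = true :: nseq k true by [].
rewrite e; split; last by rewrite /= IH2.
rewrite [tr _ _ (true :: _)]/= IH1.
case: ifP => _ //. by rewrite outw_oN mulSn nseqD.
Qed.

Lemma hdr_ok p n :
  tr p Hdr (enc_nat n) = (if val p == 0 then enc_nat (n * N) else [::]) /\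
  qf p Hdr (enc_nat n) = if injectiveb (sig_of p) then Rel ord0 else Dead.
Proof.
have [h1 h2] := hdr_ones p n.
rewrite /enc_nat trans_cat foldl_cat h1 h2 /=; split => //.
by case: (val p == 0).
Qed.

Lemma dead_ok p x : tr p Dead x = [::] /\ qf p Dead x = Dead.
Proof. by elim: x. Qed.

Lemma rel_ones p (i : nat) k : i + k < m ->
  tr p (Rel (inord i)) (nseq k true) = nseq k true /\ qf p (Rel (inord i)) (nseq k true) = Rel (inord (i + k)).
Proof.
elim: k i => [|k IH] i hik; first by rewrite addn0.
have hi : i < m.+1 by lia.
rewrite /= inordK // (_ : i.+1 < m) ?addnS; last by lia.
have [h1 h2] := IH i.+1 ltac:(lia).
rewrite h1 h2 /outw /= o1 addSn; split => //.
Qed.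


Lemma var_ones p i t k :
  tr p (Var i t) (nseq k true) = nseq (k * N) true /\ qf p (Var i t) (nseq k true) = Var i t.
Proof.
elim: k => [|k [IH1 IH2]] //.
have e : nseq k.+1 true = true :: nseq k true by [].
rewrite e; split; last by rewrite /= IH2.
rewrite trans_cons (_ : rstep p (Var i t) true = (Var i t, (oN, false))) //.
by rewrite IH1 outw_oN mulSn nseqD.
Qed.

Lemma inordK_K t : t < K -> nat_of_ord (inord t : 'I_K) = t.
Proof. by move=> h; rewrite inordK. Qed.

Lemma vinordK_K t : t < K -> val (inord t : 'I_K) = t.
Proof. by move=> h; rewrite /= inordK. Qed.

Lemma var_ok p i t v : t < ar i ->
  tr p (Var i (inord t)) (enc_nat v) = enc_nat (v * N + sig_of p (inord t)) /\
  qf p (Var i (inord t)) (enc_nat v) = if t.+1 < ar i then Var i (inord t.+1) else Rel ord0.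
Proof.
move=> ht; have htK : t < K by apply: ltn_trans (ar_lt i).
have [h1 h2] := var_ones p i (inord t) v.
rewrite /enc_nat trans_cat foldl_cat h1 h2 /= inordK_K //; split => //.
by rewrite /outw /= cats0 nseqD -catA.
Qed.

Lemma newvar_lt n (v : 'I_n) (j : 'I_N) : v * N + j < n * N.
Proof. have := ltn_ord v; have := ltn_ord j; nia. Qed.

Definition newvar n (v : 'I_n) (j : 'I_N) : 'I_(n * N) := Ordinal (newvar_lt v j).

Fixpoint mkvars n (sg : Fam) t0 (ws : seq 'I_n) : seq 'I_(n * N) :=
  if ws is v :: ws' then newvar v (sg (inord t0)) :: mkvars sg t0.+1 ws' else [::].

Lemma size_mkvars n sg t0 (ws : seq 'I_n) : size (mkvars sg t0 ws) = size ws.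
Proof. by elim: ws t0 => [|v ws IH] t0 //=; rewrite IH. Qed.

Definition mkt n sg k (vs : k.-tuple 'I_n) : k.-tuple 'I_(n * N) :=
  @Tuple k _ (mkvars sg 0 vs) (introT eqP (etrans (size_mkvars sg 0 vs) (size_tuple vs))).

Definition trc n (sg : Fam) (c : clause G n) : clause G (n * N) :=
  existT (fun i => (ar i).-tuple 'I_(n * N)) (projT1 c) (mkt sg (projT2 c)).

Lemma vars_ok p n i (ws : seq 'I_n) t0 : t0 + size ws = ar i -> 0 < size ws ->
  tr p (Var i (inord t0)) (flatten (map (fun v : 'I_n => enc_nat (val v)) ws)) =
    flatten (map (fun v : 'I_(n * N) => enc_nat (val v)) (mkvars (sig_of p) t0 ws)) /\
  qf p (Var i (inord t0)) (flatten (map (fun v : 'I_n => enc_nat (val v)) ws)) = Rel ord0.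
Proof.
elim: ws t0 => [|v ws IH] t0 //= hs _.
have ht : t0 < ar i by lia.
have [h1 h2] := var_ok p (val v) ht.
rewrite trans_cat foldl_cat h1 h2.
case: ws IH hs => [|v' ws] IH /= hs.
  by rewrite (_ : t0.+1 < ar i = false); [split | lia].
rewrite (_ : t0.+1 < ar i = true); last by lia.
have [h3 h4] := IH t0.+1 ltac:(rewrite /=; lia) isT.
by rewrite /= in h3 h4; rewrite h3 h4.
Qed.


Lemma clause_ok p n (c : clause G n) :
  tr p (Rel ord0) (enc_clause c) = enc_clause (trc (sig_of p) c) /\
  qf p (Rel ord0) (enc_clause c) = Rel ord0.
Proof.
case: c => i vs; rewrite /enc_clause /trc /=.
have h0 : (ord0 : 'I_m.+1) = inord 0 by apply: val_inj; rewrite /= inordK.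
have [h1 h2] := @rel_ones p 0 i (ltn_ord i).
have hst : rstep p (Rel (inord i)) false = (if 0 < ar i then Var i (inord 0) else Rel ord0, (o0, true)).
  have e : val (inord i : 'I_m.+1) = val i by exact: inordK (ltnW (ltn_ord i)).
  by rewrite /rstep /Rel /= e valK.
have fc : forall q b x, qf p q (b :: x) = qf p (rstep p q b).1 x by [].
set Xs := flatten _.
have -> : enc_nat i ++ Xs = nseq i true ++ (false :: Xs) by rewrite /enc_nat -catA.
rewrite h0 trans_cat foldl_cat h1 h2 add0n trans_cons fc hst.
rewrite (_ : outw (o0, true) = [:: false]) // -h0 catA.
have hmv : forall ws, val vs = ws -> mkvars (sig_of p) 0 vs = mkvars (sig_of p) 0 ws by move=> ws ->.
case: (posnP (ar i)) => hai.
  have e : val vs = [::] by apply/size0nil; rewrite size_tuple.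
  rewrite /Xs e /=; split => //; by rewrite cats0.
rewrite /=.
have hs : 0 + size vs = ar i by rewrite size_tuple.
have [h3 h4] := vars_ok p hs ltac:(by rewrite size_tuple).
by rewrite /Xs h3 h4.
Qed.


Definition clsL n (sg : Fam) (cl : seq (clause G n)) : seq (clause G (n * N)) :=
  if injectiveb sg then map (trc sg) cl else [::].

Definition Inew (I : instance G) : instance G :=
  existT (fun n => seq (clause G n)) (inst_n I * N)
    (flatten [seq clsL sg (inst_cl I) | sg <- enum {ffun 'I_K -> 'I_N}]).

Lemma cls_ok p n (cl : seq (clause G n)) :
  tr p (Rel ord0) (flatten (map (@enc_clause D G n) cl)) =
    flatten (map (@enc_clause D G (n * N)) (map (trc (sig_of p)) cl)) /\
  qf p (Rel ord0) (flatten (map (@enc_clause D G n) cl)) = Rel ord0.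
Proof.
elim: cl => [|c cl [IH1 IH2]] //=.
have [h1 h2] := clause_ok p c.
by rewrite trans_cat foldl_cat h1 h2 IH1 IH2.
Qed.

Lemma pass_enc p I :
  tr p Hdr (enc_inst I) = (if val p == 0 then enc_nat (inst_n I * N) else [::]) ++
     flatten (map (@enc_clause D G _) (clsL (sig_of p) (inst_cl I))).
Proof.
rewrite /enc_inst trans_cat.
have [h1 h2] := hdr_ok p (inst_n I).
rewrite h1 h2 /clsL; congr (_ ++ _).
case: (injectiveb (sig_of p)).
  by have [h3 _] := cls_ok p (inst_cl I).
by have [h3 _] := dead_ok p (flatten (map (@enc_clause D G _) (inst_cl I))).
Qed.

Lemma flatten_map_flatten (A B : Type) (f : A -> seq B) (L : seq (seq A)) :
  flatten (map f (flatten L)) = flatten (map (fun l => flatten (map f l)) L).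
Proof. by elim: L => [|l L IH] //=; rewrite map_cat flatten_cat IH. Qed.

Lemma sig_enum : [seq sig_of (inord i) | i <- iota 0 S.+1] = enum {ffun 'I_K -> 'I_N}.
Proof.
rewrite -(mkseq_nth dflt (enum {ffun 'I_K -> 'I_N})) /mkseq -cardE -S_card.
apply/eq_in_map => i; rewrite mem_iota /= => hi.
by rewrite /sig_of; congr nth; apply: inordK.
Qed.

Lemma F_enc I : F (enc_inst I) = enc_inst (Inew I).
Proof.
rewrite /F /outs.
set body := fun sg : Fam => flatten (map (@enc_clause D G _) (clsL sg (inst_cl I))).
have E : [seq tr (inord i) Hdr (enc_inst I) | i <- iota 0 S.+1] =
   (enc_nat (inst_n I * N) ++ body (sig_of (inord 0))) :: [seq body (sig_of (inord i)) | i <- iota 1 S].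
  rewrite /= pass_enc vinordK //; congr (_ :: _).
  apply/eq_in_map => i; rewrite mem_iota => /andP[hi1 hi2].
  rewrite pass_enc vinordK; last by lia.
  by rewrite ifF //; apply/negbTE; rewrite -lt0n.
rewrite E /= -catA.
rewrite /enc_inst /Inew /=; congr (_ ++ _).
rewrite flatten_map_flatten -sig_enum -!map_comp /=.
reflexivity.
Qed.


Lemma mem_Inew I c' : c' \in inst_cl (Inew I) ->
  exists (sg : Fam) c, [/\ injectiveb sg, c \in inst_cl I & c' = trc sg c].
Proof.
move/flatten_mapP => [sg _]; rewrite /clsL; case: ifP => // hinj /mapP [c hc ->].
by exists sg, c.
Qed.

Lemma mem_Inew' I (sg : Fam) c : injectiveb sg -> c \in inst_cl I -> trc sg c \in inst_cl (Inew I).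
Proof.
move=> hinj hc; apply/flatten_mapP; exists sg; first by rewrite mem_enum.
by rewrite /clsL hinj; apply: map_f.
Qed.

Lemma newvar_mod n (v : 'I_n) j : val (newvar v j) %% N = j.
Proof. by rewrite /= modnMDl modn_small. Qed.

Lemma divord_lt n (y : 'I_(n * N)) : y %/ N < n.
Proof. by rewrite ltn_divLR ?N_gt0. Qed.

Definition divord n (y : 'I_(n * N)) : 'I_n := Ordinal (divord_lt y).

Lemma divord_newvar n (v : 'I_n) j : divord (newvar v j) = v.
Proof. by apply: val_inj; rewrite /= divnMDl ?N_gt0 // divn_small // addn0. Qed.

Lemma map_mkvars_div n (a : 'I_n -> D) sg t0 ws :
  map (fun y => a (divord y)) (mkvars sg t0 ws) = map a ws.
Proof. by elim: ws t0 => [|v ws IH] t0 //=; rewrite divord_newvar IH. Qed.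

Lemma mkvars_mod n sg t0 (ws : seq 'I_n) y : y \in mkvars sg t0 ws ->
  exists2 t, t0 <= t < t0 + size ws & val y %% N = sg (inord t).
Proof.
elim: ws t0 => [|v ws IH] t0 //=; rewrite inE => /orP[/eqP ->|].
  by exists t0; [rewrite leqnn /=; lia | rewrite newvar_mod].
move/IH => [t ht hy]; exists t => //; lia.
Qed.

Lemma mkvars_uniq n (sg : Fam) t0 (ws : seq 'I_n) : injective sg -> t0 + size ws <= K ->
  uniq (mkvars sg t0 ws).
Proof.
move=> hinj; elim: ws t0 => [|v ws IH] t0 //= hs.
rewrite IH ?andbT; last by lia.
apply/negP => /mkvars_mod [t ht]; rewrite newvar_mod => /val_inj /hinj /(congr1 val).
rewrite !vinordK_K; lia.
Qed.

Lemma Inew_norep I : no_repeats (Inew I).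
Proof.
move=> c' /mem_Inew [sg [[i vs] [hinj hc ->]]] /=.
apply: mkvars_uniq; first exact/injectiveP.
by rewrite size_tuple add0n ltnW // ar_lt.
Qed.

Lemma Inew_satP I : satP I -> satP (Inew I).
Proof.
case=> a ha; exists (fun y => a (divord y)) => c' /mem_Inew [sg [[i vs] [hinj hc ->]]] /=.
have -> : map_tuple (fun y => a (divord y)) (mkt sg vs) = map_tuple a vs.
  by apply: val_inj; rewrite /= map_mkvars_div.
exact: (ha _ hc).
Qed.


Lemma hall (A : 'I_K -> {set 'I_N}) : (forall t, K <= #|A t|) ->
  exists sg : Fam, injective sg /\ forall t, sg t \in A t.
Proof.
move=> hA0.
have step : forall k, k <= K -> exists s : seq 'I_N,
    [/\ size s = k, uniq s & forall t : 'I_K, t < k -> nth j0 s t \in A t].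
  elim=> [|k IH] hk; first by exists [::].
  have [s [hs hu hA]] := IH (ltnW hk).
  set tk : 'I_K := inord k.
  have : 0 < #|A tk :\: [set x in s]|.
    rewrite cardsD.
    have h1 : #|A tk :&: [set x in s]| <= #|[set x in s]| := subset_leq_card (subsetIr _ _).
    have h2 : #|[set x in s]| <= size s by rewrite cardsE; exact: card_size.
    have h3 := hA0 tk.
    lia.
  case/card_gt0P => x; rewrite in_setD inE => /andP [hxs hxA].
  exists (rcons s x); split.
  - by rewrite size_rcons hs.
  - by rewrite rcons_uniq hxs hu.
  - move=> t ht; rewrite nth_rcons hs.
    case: ltnP => htk; first exact: hA.
    have -> : t = tk by apply: val_inj; rewrite /tk vinordK_K //=; lia.
    by rewrite vinordK_K ?eqxx.
have [s [hs hu hA]] := step K (leqnn K).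
exists [ffun t : 'I_K => nth j0 s t]; split.
  move=> t1 t2; rewrite !ffunE => /eqP; rewrite nth_uniq ?hs // => /eqP /val_inj.
  exact.
by move=> t; rewrite ffunE; apply: hA.
Qed.

Definition av n (b : 'I_(n * N) -> D) (v : 'I_n) : D :=
  [arg max_(d > b (newvar v j0)) #|[set j | b (newvar v j) == d]|].

Lemma av_big n (b : 'I_(n * N) -> D) v : K <= #|[set j | b (newvar v j) == av b v]|.
Proof.
rewrite /av; case: arg_maxnP => //= d _ hmax.
have hsum := cs (fun j => b (newvar v j)).
rewrite card_ord in hsum.
have h : \sum_(d' : D) #|[set j | b (newvar v j) == d']| <= #|D| * #|[set j | b (newvar v j) == d]|.
  rewrite -sum_nat_const; apply: leq_sum => d' _; exact: hmax.
rewrite hsum in h.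
have hK : 0 < K by [].
exact: (arith_maj hK h).
Qed.

Lemma map_mkvars_b n (b : 'I_(n * N) -> D) (a : 'I_n -> D) (sg : Fam) t0 (ws : seq 'I_n) :
  (forall t v, nth None (map Some ws) t = Some v -> b (newvar v (sg (inord (t0 + t)))) = a v) ->
  map b (mkvars sg t0 ws) = map a ws.
Proof.
elim: ws t0 => [|v ws IH] t0 //= h.
rewrite -(h 0 v) ?addn0 //; congr (_ :: _); apply: IH => t v' ht.
by rewrite addSnnS; apply: h.
Qed.

Lemma Inew_satQ I : satQ (Inew I) -> satQ I.
Proof.
case=> b hb; exists (av b); case=> i vs hc /=.
pose A (t : 'I_K) := if nth None (map Some (val vs)) t is Some v
  then [set j | b (newvar v j) == av b v] else setT.
have hA : forall t, K <= #|A t|.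
  move=> t; rewrite /A; case: nth => [v|]; first exact: av_big.
  by rewrite cardsT card_ord K_leN.
have [sg [hinj hsg]] := hall hA.
have := hb _ (mem_Inew' (introT (injectiveP _) hinj) hc); rewrite /=.
have -> : map_tuple b (mkt sg vs) = map_tuple (av b) vs; last by [].
apply: val_inj => /=; apply: map_mkvars_b => t v ht.
have htK : t < K.
  have : t < size (map Some (val vs)) by rewrite ltnNge; apply/negP => h; rewrite nth_default in ht.
  rewrite size_map size_tuple => h; exact: ltn_trans (ar_lt i).
have := hsg (inord t); rewrite /A inordK_K // ht inE add0n => /eqP.
exact.
Qed.

End Red.

Definition idTM : TM := @MkTM 0 (fun _ _ => None).

Lemma id_ptc : poly_time_computable id.
Proof.
exists idTM, 1 => x; exists (init_config idTM x); split.
  exact: halt_run.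
case: x => [|b x] //=.
by have := @read_word_map (b :: x) [::] isT; rewrite cats0.
Qed.

Theorem theoremC1 (D : finType) (G : pr_family D)
  (HPQ : forall i : 'I_(pf_m G), @pf_P D G i \subset @pf_Q D G i) :
  pt_equivalent (PCSP_R G) (PCSP G).
Proof.
split.
  exists id; split; first exact: id_ptc.
  split.
    by move=> x [I [-> _ hI]]; exists I.
  by move=> x [I [-> _ hI]]; exists I.
exists (F G); split; first exact: F_ptc.
split.
  move=> x [I [-> hI]]; exists (Inew I); split.
  - exact: F_enc.
  - exact: Inew_norep.
  - exact: Inew_satP.
move=> x [I [-> hI]]; exists (Inew I); split.
- exact: F_enc.
- exact: Inew_norep.
- by move/Inew_satQ.
Qed.
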